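(* Consider the pulse-coupled oscillator network described in the context with effective coupling matrix $\varepsilon_{ij}=\varepsilon_j$ for $i\neq j$ and $\varepsilon_{ii}$ on the diagonal, where $\varepsilon_j>0$, $0\le \varepsilon_{jj}\le\varepsilon_j$ and $\sum_j\varepsilon_{ij}<1$, with a rise function $U$ and a neuronal partial reset function $R$. For $\Sigma=(\sigma_1,\dots,\sigma_N)\in\mathbb{R}^N$ and $\phi$ define $\mathbf{L}=(\mathbf{L}_1,\dots,\mathbf{L}_N)$ by $$\mathbf{L}_i(\Sigma,\phi):=\Big[\bigodot_{s=i+1}^{N+i-1}\big(S_{\sigma_s}\circ H_{\varepsilon_s}\big)\Big]\circ S_{\sigma_i}\circ J_{\varepsilon_{ii}}(\phi),\qquad i\in\{1,\dots,N\},$$ with indices taken modulo $N$. Then an asynchronous periodic state (in which the units fire one at a time in the cyclic order $1,2,\dots,N$) exists if and only if the equation $\mathbf{L}(\Sigma,1)=(1,1,\dots,1)$ has a solution $\Sigma^*\in\mathbb{R}^N$ with $\sigma^*_r>0$ for all $r\in\{1,\dots,N\}$.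
   Context: Model: $N$ units with phases $\phi_i$. A rise function is a smooth $U:[0,\infty)\to[0,\infty)$ with $U'>0$, $U(0)=0$, $U(1)=1$; $U^{-1}$ is its inverse. A partial reset function is a monotonically increasing $R:\mathbb{R}\to\mathbb{R}$ with $R(0)=0$; it is neuronal if $0\le R(\zeta)\le\zeta$ for all $\zeta\ge0$. For $\varepsilon\ge0$, $\sigma\in\mathbb{R}$: $H_\varepsilon(\phi)=U^{-1}(U(\phi)+\varepsilon)$, $J_\varepsilon(\phi)=U^{-1}(R(U(\phi)+\varepsilon-1))$, $S_\sigma(\phi)=\phi+\sigma$. Composition notation: $\bigodot_{s=p}^{q}(S_{\sigma_s}\circ H_{\varepsilon_s}):=S_{\sigma_q}\circ H_{\varepsilon_q}\circ\cdots\circ S_{\sigma_p}\circ H_{\varepsilon_p}$ (the factor with index $p$ is applied first). Dynamics: $\varepsilon_{ij}\ge0$ is the strength of the pulse sent from unit $j$ to unit $i$. Between events every phase increases at unit rate. When at time $t$ the set $\Theta^{(0)}=\{j:\phi_j(t^-)=1\}$ is nonempty, an avalanche occurs: with potentials $u_i^{(0)}=U(\phi_i(t^-))$, set $u_i^{(k+1)}=u_i^{(k)}+\sum_{j\in\Theta^{(k)}}\varepsilon_{ij}$ and $\Theta^{(k+1)}=\{i: u_i^{(k)}<1\le u_i^{(k+1)}\}$ until $\Theta^{(k+1)}=\emptyset$; let $\Theta=\bigcup_k\Theta^{(k)}$. Then $\phi_i(t^+)=H_{\sum_{j\in\Theta}\varepsilon_{ij}}(\phi_i(t^-))$ for $i\notin\Theta$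 and $\phi_i(t^+)=J_{\sum_{j\in\Theta}\varepsilon_{ij}}(\phi_i(t^-))$ for $i\in\Theta$ (units in $\Theta$ fire a pulse and are partially reset). The return map sends the network state just before a fixed reference unit fires to the state just before that unit fires next. An asynchronous periodic state is a state invariant under the return map in which every avalanche has size $1$ (each unit fires alone and never receives supra-threshold input). *)

(* Defs.v *)
From Stdlib Require Import Reals Lra Lia Arith.
Open Scope R_scope.

(* Units are indexed 0 .. N-1 (paper: 1 .. N); vectors are functions nat -> R,
   only indices < N are meaningful. *)

(* Rise function U : [0,oo) -> [0,oo), smooth (C^infinity), U' > 0, U 0 = 0, U 1 = 1.
   U is given as a total function R -> R; only its values on [0,oo) matter.
   D n is the n-th derivative. *)
Definition rise_function (U : R -> R) : Prop :=
  exists D : nat -> R -> R,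
    D 0%nat = U /\
    (forall (n : nat) (x : R), 0 <= x -> derivable_pt_lim (D n) x (D (S n) x)) /\
    (forall x, 0 <= x -> 0 < D 1%nat x) /\
    (forall x, 0 <= x -> 0 <= U x) /\
    U 0 = 0 /\ U 1 = 1.

(* Neuronal partial reset function (monotonically increasing = non-decreasing). *)
Definition neuronal_reset (Rs : R -> R) : Prop :=
  (forall a b, a <= b -> Rs a <= Rs b) /\
  Rs 0 = 0 /\
  (forall z, 0 <= z -> 0 <= Rs z /\ Rs z <= z).

(* U^{-1} is the inverse of U on its image, hence partial.  We therefore use the
   graphs of the (partial) maps H_eps and J_eps:
   H_rel U eps phi psi  <->  H_eps(phi) is defined and equals psi
   (psi = U^{-1}(U(phi)+eps), i.e. psi >= 0 and U psi = U phi + eps;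
    this determines psi uniquely since U is strictly increasing on [0,oo)). *)
Definition H_rel (U : R -> R) (eps phi psi : R) : Prop :=
  0 <= phi /\ 0 <= psi /\ U psi = U phi + eps.

Definition J_rel (U Rs : R -> R) (eps phi psi : R) : Prop :=
  0 <= phi /\ 0 <= psi /\ U psi = Rs (U phi + eps - 1).

Definition epsij (eps epsd : nat -> R) (i j : nat) : R :=
  if Nat.eqb i j then epsd j else eps j.

(* Graph of  (S_{sigma_{start+m-1}} o H_{eps_{start+m-1}}) o ... o (S_{sigma_start} o H_{eps_start}),
   indices taken modulo N. *)
Fixpoint Hchain (U : R -> R) (N : nat) (eps sig : nat -> R)
    (m start : nat) (phi psi : R) : Prop :=
  match m with
  | O => psi = phi
  | S m' => exists chi, H_rel U (eps (start mod N)) phi chi /\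
             Hchain U N eps sig m' (S start) (chi + sig (start mod N)) psi
  end.

(* Graph of L_i(Sigma, .) :
   L_i = [odot_{s=i+1}^{N+i-1} (S_{sigma_s} o H_{eps_s})] o S_{sigma_i} o J_{eps_ii}. *)
Definition L_rel (U Rs : R -> R) (N : nat) (eps epsd sig : nat -> R)
    (i : nat) (phi psi : R) : Prop :=
  exists a, J_rel U Rs (epsd i) phi a /\
            Hchain U N eps sig (N - 1) (S i) (a + sig i) psi.

(* One event in which unit j fires alone (avalanche of size 1):
   Theta^(0) = {j}, Theta^(1) = empty; x is the state just before, y just after. *)
Definition single_firing_event (U Rs : R -> R) (N : nat) (eps epsd : nat -> R)
    (j : nat) (x y : nat -> R) : Prop :=
  x j = 1 /\ (forall i, (i < N)%nat -> i <> j -> x i <> 1) /\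
  (forall i, (i < N)%nat ->
     ~ (U (x i) < 1 /\ 1 <= U (x i) + epsij eps epsd i j)) /\
  J_rel U Rs (epsd j) (x j) (y j) /\
  (forall i, (i < N)%nat -> i <> j -> H_rel U (eps j) (x i) (y i)).

(* Free evolution from the post-event state y until the next event (first time a
   phase reaches 1); z is the state just before that event. *)
Definition free_evolution (N : nat) (y z : nat -> R) : Prop :=
  exists delta, 0 < delta /\
    (forall i, (i < N)%nat -> z i = y i + delta) /\
    (forall i, (i < N)%nat -> z i <= 1) /\
    (exists i, (i < N)%nat /\ z i = 1).

Definition valid_state (N : nat) (x : nat -> R) : Prop :=
  forall i, (i < N)%nat -> 0 <= x i /\ x i <= 1.

(* x is an asynchronous periodic state (reference unit 0) in which units fire one
   at a time in the cyclic order 0,1,...,N-1: starting just before unit 0 fires,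
   the units 0,1,...,N-1 fire alone in turn (avalanches of size 1) and the state
   just before unit 0 fires next equals x (invariance under the return map). *)
Definition async_periodic_state (U Rs : R -> R) (N : nat) (eps epsd : nat -> R)
    (x : nat -> R) : Prop :=
  valid_state N x /\
  exists (pre post : nat -> nat -> R),
    (forall i, (i < N)%nat -> pre 0%nat i = x i) /\
    (forall k, (k < N)%nat ->
       single_firing_event U Rs N eps epsd k (pre k) (post k) /\
       free_evolution N (post k) (pre (S k))) /\
    (forall i, (i < N)%nat -> pre N i = x i).

(* Main.v *)
Require Import Defs.
From Stdlib Require Import Reals Lra Lia Arith IndefiniteDescription.
Open Scope R_scope.

Lemma U_strict U : rise_function U -> forall a b, 0 <= a -> a < b -> U a < U b.
Proof.
  intros [D [H0 [Hd [Hpos _]]]] a b Ha Hab.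
  destruct (MVT_cor2 U (D 1%nat) a b Hab) as [c [Hc Hcab]].
  - intros c Hc. rewrite <- H0. apply Hd. lra.
  - assert (0 < D 1%nat c) by (apply Hpos; lra). nra.
Qed.

Lemma U_mono U : rise_function U -> forall a b, 0 <= a -> a <= b -> U a <= U b.
Proof.
  intros hU a b Ha Hab. destruct (Rle_lt_or_eq_dec a b Hab) as [h|h].
  - left. apply U_strict; auto.
  - subst. lra.
Qed.

Lemma H_incr U e phi psi : rise_function U -> 0 < e -> H_rel U e phi psi -> phi < psi.
Proof.
  intros hU he [h1 [h2 h3]]. destruct (Rlt_or_le phi psi) as [h|h]; auto.
  exfalso. assert (U psi <= U phi) by (apply U_mono; auto). lra.
Qed.

Lemma mod_ge N a : (N <= a < N + N)%nat -> (a mod N = a - N)%nat.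
Proof.
  intros H. replace a with ((a - N) + 1 * N)%nat at 1 by lia.
  rewrite Nat.Div0.mod_add. apply Nat.mod_small. lia.
Qed.

Lemma chain_extract U N eps sig : forall m start phi psi,
  Hchain U N eps sig m start phi psi -> exists f : nat -> R, f 0%nat = phi /\ f m = psi /\
  forall t, (t < m)%nat -> H_rel U (eps ((start+t) mod N)%nat) (f t) (f (S t) - sig ((start+t) mod N)%nat).
Proof.
  induction m; intros start phi psi H; simpl in H.
  - subst. exists (fun _ => phi). split; [reflexivity| split; [reflexivity | intros; lia]].
  - destruct H as [chi [Hh Hc]]. destruct (IHm _ _ _ Hc) as [f [f0 [fm ft]]].
    exists (fun t => match t with O => phi | S t' => f t' end).
    split; [reflexivity|]. split; [exact fm|].
    intros t Ht. destruct t as [|t].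
    + cbv beta iota. rewrite f0. replace (start+0)%nat with start by lia.
      replace (chi + sig (start mod N)%nat - sig (start mod N)%nat) with chi by ring. exact Hh.
    + cbv beta iota. replace (start + S t)%nat with (S start + t)%nat by lia. apply ft. lia.
Qed.

Lemma choice_nat {A} (P : nat -> A -> Prop) : (forall i, exists y, P i y) -> exists f, forall i, P i (f i).
Proof.
  intros H. exists (fun i => proj1_sig (constructive_indefinite_description _ (H i))).
  intros i. exact (proj2_sig _).
Qed.
Lemma forward (N : nat) (U Rs : R -> R) (eps epsd : nat -> R) (hN : (1 <= N)%nat) x :
  async_periodic_state U Rs N eps epsd x ->
  (exists sig : nat -> R,
     (forall r, (r < N)%nat -> 0 < sig r) /\
     (forall i, (i < N)%nat -> L_rel U Rs N eps epsd sig i 1 1)).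
Proof.
  intros [hv [pre [post [h0 [hk hNx]]]]].
  set (sig := fun k => pre (S k) 0%nat - post k 0%nat).
  assert (hstep : forall k i, (k < N)%nat -> (i < N)%nat -> pre (S k) i = post k i + sig k).
  { intros k i hk' hi. destruct (hk k hk') as [_ [d [dpos [dz _]]]].
    unfold sig. rewrite (dz i hi), (dz 0%nat ltac:(lia)). ring. }
  assert (hpmod : forall j i, (j <= N)%nat -> (i < N)%nat -> pre j i = pre (j mod N)%nat i).
  { intros j i hj hi. destruct (Nat.eq_dec j N) as [e|e].
    - subst. rewrite Nat.Div0.mod_same, hNx, h0; auto.
    - rewrite Nat.mod_small; auto. lia. }
  assert (hchain : forall i, (i < N)%nat -> forall m start,
     (forall t, (t < m)%nat -> ((start+t) mod N)%nat <> i) ->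
     Hchain U N eps sig m start (pre (start mod N)%nat i) (pre ((start+m) mod N)%nat i)).
  { intros i hi m. induction m; intros start Ht.
    - simpl. rewrite Nat.add_0_r. reflexivity.
    - set (j := (start mod N)%nat).
      assert (hj : (j < N)%nat) by (apply Nat.mod_upper_bound; lia).
      assert (hij : i <> j) by (intro e; apply (Ht 0%nat ltac:(lia)); rewrite Nat.add_0_r; auto).
      simpl. exists (post j i). split.
      + destruct (hk j hj) as [[_ [_ [_ [_ hH]]]] _]. apply hH; auto.
      + rewrite <- hstep by auto. rewrite hpmod by lia. unfold j.
        replace (S (start mod N)%nat) with (1 + start mod N)%nat by lia. rewrite Nat.Div0.add_mod_idemp_r.
        replace (start + S m)%nat with (S start + m)%nat by lia.
        replace (1 + start)%nat with (S start) by lia.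
        apply IHm. intros t ht. replace (S start + t)%nat with (start + S t)%nat by lia.
        apply Ht. lia. }
  exists sig. split.
  - intros r hr. destruct (hk r hr) as [_ [d [dpos [dz _]]]].
    unfold sig. rewrite (dz 0%nat ltac:(lia)). lra.
  - intros i hi. destruct (hk i hi) as [[hii [_ [_ [hJ _]]]] _].
    exists (post i i). split.
    + rewrite <- hii. exact hJ.
    + rewrite <- hstep by auto. rewrite hpmod by lia.
      replace 1 with (pre ((S i + (N - 1)) mod N)%nat i).
      * apply hchain; auto. intros t ht.
        destruct (Nat.lt_ge_cases (S i + t) N).
        -- rewrite Nat.mod_small; lia.
        -- rewrite mod_ge; lia.
      * rewrite mod_ge by lia. replace (S i + (N - 1) - N)%nat with i by lia. exact hii.
Qed.

Lemma backward (N : nat) (U Rs : R -> R) (eps epsd : nat -> R)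
  (hN : (1 <= N)%nat)
  (hU : rise_function U)
  (heps : forall j, (j < N)%nat -> 0 < eps j) sig :
     (forall r, (r < N)%nat -> 0 < sig r) ->
     (forall i, (i < N)%nat -> L_rel U Rs N eps epsd sig i 1 1) ->
  (exists x : nat -> R, async_periodic_state U Rs N eps epsd x).
Proof.
  intros hsig hL.
  assert (hex : forall i, exists p : R * (nat -> R), (i < N)%nat ->
     J_rel U Rs (epsd i) 1 (fst p) /\ snd p 0%nat = fst p + sig i /\ snd p (N-1)%nat = 1 /\
     forall t, (t < N - 1)%nat -> H_rel U (eps ((S i + t) mod N)%nat) (snd p t)
         (snd p (S t) - sig ((S i + t) mod N)%nat)).
  { intros i. destruct (lt_dec i N) as [hi|hi].
    - destruct (hL i hi) as [a [hJ hC]]. destruct (chain_extract _ _ _ _ _ _ _ _ hC) as [f [f0 [fm ft]]].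
      exists (a, f). intros _. simpl. auto.
    - exists (0, fun _ => 0). intros; lia. }
  destruct (choice_nat _ hex) as [fp hfp].
  set (a := fun i => fst (fp i)). set (f := fun i => snd (fp i)).
  assert (hmodlt : forall i t, ((S i + t) mod N < N)%nat) by (intros; apply Nat.mod_upper_bound; lia).
  assert (hinc : forall i t, (i < N)%nat -> (t < N - 1)%nat -> f i t < f i (S t)).
  { intros i t hi ht. destruct (hfp i hi) as [_ [_ [_ hH]]].
    pose proof (H_incr _ _ _ _ hU (heps _ (hmodlt i t)) (hH t ht)).
    pose proof (hsig _ (hmodlt i t)). unfold f. lra. }
  assert (hlt1 : forall i d t, (i < N)%nat -> (t + S d = N - 1)%nat -> f i t < 1).
  { intros i d. induction d; intros t hi htd.
    - destruct (hfp i hi) as [_ [_ [hN1 _]]].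
      pose proof (hinc i t hi ltac:(lia)). replace (S t) with (N-1)%nat in H by lia.
      unfold f in *. lra.
    - pose proof (hinc i t hi ltac:(lia)). pose proof (IHd (S t) hi ltac:(lia)). lra. }
  assert (hlt1' : forall i t, (i < N)%nat -> (t < N - 1)%nat -> f i t < 1).
  { intros i t hi ht. apply (hlt1 i (N - 2 - t)%nat t hi). lia. }
  assert (hfN : forall i, (i < N)%nat -> f i (N-1)%nat = 1).
  { intros i hi. destruct (hfp i hi) as [_ [_ [h _]]]. exact h. }
  assert (hnn : forall i t, (i < N)%nat -> (t <= N - 1)%nat -> 0 <= f i t <= 1).
  { intros i t hi ht. destruct (Nat.eq_dec t (N-1)%nat) as [e|e].
    - subst. rewrite hfN; auto; lra.
    - destruct (hfp i hi) as [_ [_ [_ hH]]]. destruct (hH t ltac:(lia)) as [h1 _].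
      pose proof (hlt1' i t hi ltac:(lia)). unfold f in *. lra. }
  set (pre := fun k i => if (i <? k)%nat then f i (k - i - 1)%nat else f i (k + N - i - 1)%nat).
  set (post := fun k i => if Nat.eqb i k then a i else pre (S k) i - sig k).
  assert (L1 : forall k i, (k < N)%nat -> (i < N)%nat -> i <> k -> exists t, (t < N - 1)%nat /\
     pre k i = f i t /\ pre (S k) i = f i (S t) /\ ((S i + t) mod N)%nat = k).
  { intros k i hk hi hik. unfold pre. destruct (Nat.ltb_spec i k).
    - exists (k - i - 1)%nat. destruct (Nat.ltb_spec i (S k)); [|lia].
      split; [lia|]. split; [reflexivity|]. split.
      + f_equal. lia.
      + rewrite Nat.mod_small; lia.
    - exists (k + N - i - 1)%nat. destruct (Nat.ltb_spec i (S k)); [lia|].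
      split; [lia|]. split; [reflexivity|]. split.
      + f_equal. lia.
      + rewrite mod_ge; lia. }
  assert (L2 : forall k, (k < N)%nat -> pre k k = 1).
  { intros k hk. unfold pre. rewrite Nat.ltb_irrefl. rewrite <- (hfN k hk). f_equal. lia. }
  assert (L3 : forall k, (k < N)%nat -> pre (S k) k = a k + sig k).
  { intros k hk. unfold pre. destruct (Nat.ltb_spec k (S k)); [|lia].
    replace (S k - k - 1)%nat with 0%nat by lia. destruct (hfp k hk) as [_ [h _]]. exact h. }
  assert (L4 : pre N 0%nat = 1).
  { unfold pre. destruct (Nat.ltb_spec 0 N); [|lia]. rewrite <- (hfN 0%nat ltac:(lia)). f_equal. lia. }
  assert (L5 : forall k i, (k <= N)%nat -> (i < N)%nat -> 0 <= pre k i <= 1).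
  { intros k i hk hi. unfold pre. destruct (Nat.ltb_spec i k); apply hnn; auto; lia. }
  assert (L6 : forall i, (i < N)%nat -> pre N i = pre 0%nat i).
  { intros i hi. unfold pre. destruct (Nat.ltb_spec i N); [|lia].
    destruct (Nat.ltb_spec i 0); [lia|]. f_equal. }
  exists (pre 0%nat). split.
  { intros i hi. apply L5; lia. }
  exists pre, post. split; [reflexivity|]. split.
  - intros k hk. split.
    + split; [apply L2; auto|]. split.
      { intros i hi hik. destruct (L1 k i hk hi hik) as [t [ht [e1 _]]].
        pose proof (hlt1' i t hi ht). lra. }
      split.
      { intros i hi [h1 h2]. destruct (Nat.eq_dec i k) as [e|e].
        - subst. rewrite L2 in h1 by auto. destruct hU as [_ [_ [_ [_ [_ hU1]]]]]. lra.
        - unfold epsij in h2. rewrite (proj2 (Nat.eqb_neq i k) e) in h2.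
          destruct (L1 k i hk hi e) as [t [ht [e1 [e2 e3]]]].
          destruct (hfp i hi) as [_ [_ [_ hH]]]. destruct (hH t ht) as [c1 [c2 c3]].
          rewrite e3 in c3. change (snd (fp i)) with (f i) in c3. rewrite <- e1 in c3.
          assert (f i (S t) <= 1) by (apply hnn; auto; lia).
          assert (hc: f i (S t) - sig k < 1) by (pose proof (hsig k hk); lra).
          rewrite e3 in c2. change (snd (fp i)) with (f i) in c2.
          pose proof (U_strict U hU _ _ c2 hc).
          destruct hU as [_ [_ [_ [_ [_ hU1]]]]]. lra. }
      split.
      { unfold post. rewrite Nat.eqb_refl, L2 by auto. destruct (hfp k hk) as [h _]. exact h. }
      { intros i hi hik. unfold post. rewrite (proj2 (Nat.eqb_neq i k) hik).
        destruct (L1 k i hk hi hik) as [t [ht [e1 [e2 e3]]]].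
        destruct (hfp i hi) as [_ [_ [_ hH]]]. pose proof (hH t ht) as c.
        rewrite e3 in c. change (snd (fp i)) with (f i) in c. rewrite e1, e2. exact c. }
    + exists (sig k). split; [apply hsig; auto|]. split.
      { intros i hi. unfold post. destruct (Nat.eqb_spec i k).
        - subst. apply L3; auto.
        - ring. }
      split.
      { intros i hi. apply L5; auto. }
      destruct (Nat.eq_dec (S k) N) as [e|e].
      * exists 0%nat. split; [lia|]. rewrite e. exact L4.
      * exists (S k). split; [lia|]. apply L2. lia.
  - intros i hi. apply L6; auto.
Qed.

Theorem mainTheorem1 (N : nat) (U Rs : R -> R) (eps epsd : nat -> R)
  (hN : (1 <= N)%nat)
  (hU : rise_function U)
  (hR : neuronal_reset Rs)
  (heps : forall j, (j < N)%nat -> 0 < eps j)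
  (hepsd : forall j, (j < N)%nat -> 0 <= epsd j /\ epsd j <= eps j)
  (hsum : forall i, (i < N)%nat -> sum_f_R0 (fun j => epsij eps epsd i j) (N - 1) < 1) :
  (exists x : nat -> R, async_periodic_state U Rs N eps epsd x) <->
  (exists sig : nat -> R,
     (forall r, (r < N)%nat -> 0 < sig r) /\
     (forall i, (i < N)%nat -> L_rel U Rs N eps epsd sig i 1 1)).
Proof.
  split.
  - intros [x hx]. exact (forward N U Rs eps epsd hN x hx).
  - intros [sig [h1 h2]]. exact (backward N U Rs eps epsd hN hU heps sig h1 h2).
Qed.
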